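(* Let $F$ be a nonempty face of $V_O$, let $\mathcal U_F=\{\lambda\in\Xi_1: F\subseteq H_\lambda\}$ and $\phi(F)=\bigcup_{\lambda\in\mathcal U_F}\mathrm{supp}(\lambda)$. Then $\phi(F)$ is a strongly connected orientation of a subgraph of $G$, and for every $\lambda\in\Xi_1$ we have $\lambda\in\mathcal U_F$ if and only if $\mathrm{supp}(\lambda)\subseteq\phi(F)$.
   Context: $G=(V,E)$ is a finite connected graph, possibly with parallel edges and loops; $\mathbb E$ is the set of oriented edges ($e$ and its reverse $\bar e$). Real $1$-chains $x:\mathbb E\to\mathbb R$ satisfy $x_{\bar e}=-x_e$; $\langle x,y\rangle=\sum_{e\in E}x_ey_e$, $q(x)=\langle x,x\rangle$. A flow satisfies $\sum_{e\text{ with tail }v}x_e=0$ at every vertex $v$; $H$ is the space of real flows and $\Lambda$ the lattice of integer flows. $V_O=\{x\in H: q(x)\le q(x-\mu)\ \forall\mu\in\Lambda\}$. For a flow $x$, $\mathrm{supp}(x)=\{e\in\mathbb E: x_e>0\}$. A circuit is an orientation of a cycle as a directed cycle; $x^C_e=1$ if $e\in C$, $-1$ if $\bar e\in C$, $0$ otherwise. $\Xi_1=\{x^C: C\text{ a circuit}\}$. For $\lambda\in\Xi_1$, $H_\lambda=\{x\in H: 2\langle x,\lambda\rangle=q(\lambda)\}$. An orientation of a subgraph is strongly connected if on each connected component any two vertices are joined by directed paths in both directions. *)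

(* Defs.v *)
(* Real numbers are modelled by an arbitrary real field R. *)
From HB Require Import structures.
From mathcomp Require Import all_boot all_order all_algebra.
From Stdlib Require Import Relations.
Set Implicit Arguments. Unset Strict Implicit. Unset Printing Implicit Defensive.
Import Order.TTheory GRing.Theory Num.Theory.
Local Open Scope ring_scope.

(* A finite graph with vertex type V and edge type E (parallel edges and loops
   allowed): edge e goes from tl e to hd e in its reference orientation.
   Oriented edges are pairs (e, b) : E * bool; (e, true) is e and (e, false)
   is its reverse.  A 1-chain is a function x : E -> R giving its value on
   the reference orientation; its value on an oriented edge is [ochain]. *)
Section Graph.
Variables (R : realFieldType) (V E : finType) (tl hd : E -> V).

Definition otail (o : E * bool) : V := if o.2 then tl o.1 else hd o.1.
Definition ohead (o : E * bool) : V := if o.2 then hd o.1 else tl o.1.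

Definition ochain (x : E -> R) (o : E * bool) : R :=
  if o.2 then x o.1 else - x o.1.

Definition connected_graph : Prop :=
  forall u v : V, clos_refl_trans V
    (fun a b => exists e, (tl e = a /\ hd e = b) \/ (tl e = b /\ hd e = a)) u v.

Definition dot (x y : E -> R) : R := \sum_(e : E) x e * y e.
Definition qf (x : E -> R) : R := dot x x.

Definition is_flow (x : E -> R) : Prop :=
  forall v : V, \sum_(o : E * bool | otail o == v) ochain x o = 0.

Definition is_int_flow (mu : E -> R) : Prop :=
  is_flow mu /\ exists z : E -> int, forall e, mu e = (z e)%:~R.

Definition VO (x : E -> R) : Prop :=
  is_flow x /\ forall mu, is_int_flow mu -> qf x <= qf (fun e => x e - mu e).

(* F is a face of V_O: intersection of V_O with a supporting hyperplane
   (F = V_O itself is obtained with a = 0, b = 0). *)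
Definition is_face_VO (F : (E -> R) -> Prop) : Prop :=
  exists (a : E -> R) (b : R),
    (forall x, VO x -> dot a x <= b) /\
    (forall x, F x <-> (VO x /\ dot a x = b)).

Definition is_circuit (c : seq (E * bool)) : Prop :=
  [/\ c != [::], uniq (map fst c), uniq (map otail c)
    & cycle (fun o1 o2 => ohead o1 == otail o2) c].

Definition chi (c : seq (E * bool)) : E -> R :=
  fun e => if (e, true) \in c then 1 else if (e, false) \in c then -1 else 0.

Definition in_Xi1 (lam : E -> R) : Prop :=
  exists c, is_circuit c /\ lam = chi c.

Definition in_Hlam (lam x : E -> R) : Prop :=
  is_flow x /\ 2 * dot x lam = qf lam.

Definition supp (x : E -> R) : pred (E * bool) := fun o => 0 < ochain x o.

Definition in_UF (F : (E -> R) -> Prop) (lam : E -> R) : Prop :=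
  in_Xi1 lam /\ forall x, F x -> in_Hlam lam x.

Definition phi (F : (E -> R) -> Prop) (o : E * bool) : Prop :=
  exists lam, in_UF F lam /\ supp lam o.

(* S is an orientation of a subgraph (no edge in both directions) which is
   strongly connected: vertices in the same connected component of the
   underlying subgraph are joined by a directed path in S. *)
Definition strongly_connected_orientation (S : E * bool -> Prop) : Prop :=
  (forall e, ~ (S (e, true) /\ S (e, false))) /\
  (forall u v : V,
     clos_refl_trans V (fun a b => exists o, S o /\
        ((otail o = a /\ ohead o = b) \/ (otail o = b /\ ohead o = a))) u v ->
     clos_refl_trans V (fun a b => exists o, S o /\ otail o = a /\ ohead o = b) u v).

End Graph.

(* Main.v *)
Require Import Defs.
From HB Require Import structures.
From mathcomp Require Import all_boot all_order all_algebra.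
From Stdlib Require Import Relations Lia.
Set Implicit Arguments. Unset Strict Implicit. Unset Printing Implicit Defensive.
Import Order.TTheory GRing.Theory Num.Theory.
Local Open Scope ring_scope.

Section Walks.
Variables (R : realFieldType) (V E : finType) (tl hd : E -> V).
Notation ot := (otail tl hd).
Notation oh := (Defs.ohead tl hd).

Definition rev_o (o : E * bool) : E * bool := (o.1, ~~ o.2).

Lemma ot_rev o : ot (rev_o o) = oh o.
Proof. by case: o => e [] /=; rewrite /otail /Defs.ohead. Qed.
Lemma oh_rev o : oh (rev_o o) = ot o.
Proof. by case: o => e [] /=; rewrite /otail /Defs.ohead. Qed.
Lemma rev_oK : involutive rev_o.
Proof. by case=> e b; rewrite /rev_o /= negbK. Qed.

Fixpoint walk (u v : V) (s : seq (E * bool)) : bool :=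
  match s with
  | [::] => u == v
  | o :: s' => (ot o == u) && walk (oh o) v s'
  end.

Lemma walk_cat u v w s t : walk u v s -> walk v w t -> walk u w (s ++ t).
Proof.
elim: s u => [|o s IH] u /=; first by move/eqP->.
by case/andP=> -> H1 H2; rewrite IH.
Qed.

Lemma walk_catE u w s t : walk u w (s ++ t) -> exists v, walk u v s /\ walk v w t.
Proof.
elim: s u => [|o s IH] u /=; first by move=> H; exists u; rewrite eqxx.
case/andP=> H1 /IH [v [H2 H3]]; exists v; by rewrite H1 H2.
Qed.

Variable x : E -> R.
Definition wt (o : E * bool) : R := 1 - 2 * ochain x o.
Definition W (s : seq (E * bool)) : R := \sum_(o <- s) wt o.

Lemma W_cat s t : W (s ++ t) = W s + W t.
Proof. by rewrite /W big_cat. Qed.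
Lemma W_cons o s : W (o :: s) = wt o + W s.
Proof. by rewrite /W big_cons. Qed.
Lemma W_nil : W [::] = 0.
Proof. by rewrite /W big_nil. Qed.

Lemma wt_rev o : wt o + wt (rev_o o) = 2.
Proof.
case: o => e b; rewrite /wt /ochain /rev_o /=; case: b => /=;
rewrite ?opprK mulrN opprK addrACA ?subrr ?(addrC (- _)) ?subrr addr0 //.
Qed.

Lemma dup_split (T T' : eqType) (f : T -> T') s :
  ~~ uniq (map f s) -> exists q1 a q2, s = q1 ++ a :: q2 /\ exists2 b, b \in q2 & f a = f b.
Proof.
elim: s => [|a s IH] //=; rewrite negb_and negbK; case/orP.
  case/mapP=> b Hb Hab; exists [::], a, s; split => //; by exists b.
case/IH=> q1 [a' [q2 [-> H]]]; by exists (a :: q1), a', q2.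
Qed.

Lemma closed_nonneg :
  (forall c u, c != [::] -> uniq (map fst c) -> uniq (map ot c) -> walk u u c -> 0 <= W c) ->
  forall s u, walk u u s -> 0 <= W s.
Proof.
move=> H s; have [n] := ubnP (size s); elim: n s => // n IH s Hs u Hw.
case: s Hs Hw => [|a0 s0] Hs Hw; first by rewrite W_nil.
set s := a0 :: s0 in Hs Hw *.
have split_case : forall q1 a p1 b p2, s = q1 ++ a :: p1 ++ b :: p2 ->
   ot a = ot b \/ b = rev_o a -> 0 <= W s.
  move=> q1 a p1 b p2 Es Hab; rewrite Es in Hw Hs.
  have [v [Hq1 /= /andP [/eqP Hav Hr]]] := walk_catE Hw.
  have [v2 [Hp1 /= /andP [/eqP Hbv Hp2]]] := walk_catE Hr.
  rewrite Es !W_cat !W_cons W_cat W_cons.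
  have Hsz : forall t : seq (E * bool), (size t < size q1 + (size p1 + size p2).+2)%N -> (size t < n)%N.
    move=> t Ht; apply: leq_trans Ht _.
    by move: Hs; rewrite !size_cat /= !size_cat /= !addnS ltnS.
  case: Hab => [Hab | Hb].
  - have W1 : 0 <= W (a :: p1).
      apply: (IH _ _ v); first by apply: Hsz; apply/ssrnat.leP; rewrite ?size_cat; simpl; rewrite ?size_cat -?plusE; lia.
      by rewrite /= Hav eqxx -Hav Hab Hbv.
    have W2 : 0 <= W (q1 ++ b :: p2).
      apply: (IH _ _ u); first by apply: Hsz; apply/ssrnat.leP; rewrite ?size_cat; simpl; rewrite ?size_cat -?plusE; lia.
      apply: walk_cat Hq1 _; by rewrite /= -Hab Hav eqxx.
    move: W1 W2; rewrite W_cons W_cat W_cons => W1 W2.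
    have -> : W q1 + (wt a + (W p1 + (wt b + W p2))) =
              (wt a + W p1) + (W q1 + (wt b + W p2)).
      by rewrite addrCA (addrCA (W q1)) addrA.
    exact: addr_ge0.
  - subst b.
    have W1 : 0 <= W p1.
      apply: (IH _ _ (oh a)); first by apply: Hsz; apply/ssrnat.leP; rewrite ?size_cat; simpl; rewrite ?size_cat -?plusE; lia.
      by move: Hp1; rewrite -Hbv ot_rev.
    have W2 : 0 <= W (q1 ++ p2).
      apply: (IH _ _ u); first by apply: Hsz; apply/ssrnat.leP; rewrite ?size_cat; simpl; rewrite ?size_cat -?plusE; lia.
      apply: walk_cat Hq1 _; by rewrite -Hav -oh_rev.
    move: W2; rewrite W_cat => W2.
    have -> : W q1 + (wt a + (W p1 + (wt (rev_o a) + W p2))) =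
              (wt a + wt (rev_o a)) + W p1 + (W q1 + W p2).
      by rewrite addrCA (addrCA (W q1)) (addrCA (W q1)) (addrCA (W p1)) addrA addrA.
    by rewrite wt_rev addr_ge0 // addr_ge0 // ler0n.
have [Ut|Ut] := boolP (uniq (map ot s)).
  have [Uf|Uf] := boolP (uniq (map fst s)); first exact: (H s u).
  have [q1 [a [q2 [Es [b Hb Hab]]]]] := dup_split Uf.
  case/splitPr: Hb Es => p1 p2 Es.
  apply: (split_case q1 a p1 b p2 Es).
  case: a b Hab {Es} => e1 b1 [e2 b2] /= <-.
  case: (eqVneq b1 b2) => [-> | Hne]; first by left.
  by right; rewrite /rev_o /=; case: b1 b2 Hne => [] [].
have [q1 [a [q2 [Es [b Hb Hab]]]]] := dup_split Ut.
case/splitPr: Hb Es => p1 p2 Es.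
by apply: (split_case q1 a p1 b p2 Es); left.
Qed.

End Walks.

Section Chi.
Variables (R : realFieldType) (V E : finType) (tl hd : E -> V).
Notation ot := (otail tl hd).
Notation oh := (Defs.ohead tl hd).
Notation rel := (fun o1 o2 : E * bool => oh o1 == ot o2).

Lemma path_walk a p z : path rel a (rcons p z) -> walk tl hd (oh a) (ot z) p.
Proof.
elim: p a => [|b p IH] a /=; first by rewrite andbT.
by case/andP=> /eqP -> /IH ->; rewrite eqxx.
Qed.

Lemma walk_path a p w z : walk tl hd (oh a) w p -> ot z = w -> path rel a (rcons p z).
Proof.
elim: p a => [|b p IH] a /=; first by move/eqP=> -> ->; rewrite eqxx.
by case/andP=> /eqP -> H Hz; rewrite eqxx (IH _ H Hz).
Qed.

Lemma circuit_walk c : is_circuit tl hd c -> exists u, walk tl hd u u c.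
Proof.
case=> + _ _; case: c => [|a p] //= _ Hc; exists (ot a).
by rewrite eqxx (path_walk Hc).
Qed.

Lemma walk_circuit c u : c != [::] -> uniq (map fst c) -> uniq (map ot c) ->
  walk tl hd u u c -> is_circuit tl hd c.
Proof.
move=> Hn Hf Ht Hw; split => //; case: c Hn Hf Ht Hw => [|a p] // _ _ _ /= /andP [/eqP Ha Hw].
by apply: (walk_path Hw).
Qed.

Lemma notboth (c : seq (E * bool)) (e : E) : uniq (map fst c) -> (e, true) \in c -> (e, false) \in c -> False.
Proof.
elim: c => [|a c IH] //= /andP [Ha Hu]; rewrite !in_cons => /orP [/eqP Ea | H1] /orP [/eqP Eb | H2].
- by rewrite -Eb in Ea.
- by move: Ha; rewrite -Ea /=; move/negP; apply; apply/mapP; exists (e, false).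
- by move: Ha; rewrite -Eb /=; move/negP; apply; apply/mapP; exists (e, true).
- exact: IH.
Qed.

Lemma chi_ochain (c : seq (E * bool)) o : uniq (map fst c) ->
  ochain (chi R c) o = (o \in c)%:R - (rev_o o \in c)%:R.
Proof.
move=> Hu; case: o => e b; rewrite /ochain /chi /rev_o /=.
have NB := notboth Hu (e:=e).
case: b => /=; case H1: ((e, true) \in c); case H2: ((e, false) \in c) => //=;
  rewrite ?subr0 ?sub0r ?opprK ?oppr0 //; exfalso; exact: NB.
Qed.

Lemma supp_chi (c : seq (E * bool)) o : uniq (map fst c) -> supp (chi R c) o = (o \in c).
Proof.
move=> Hu; rewrite /supp /= chi_ochain //.
case H1: (o \in c); case H2: (rev_o o \in c) => /=; rewrite ?subr0 ?sub0r ?ltr01 ?oppr_gt0 ?ltr10 ?ltxx //.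
exfalso; case: o H1 H2 => e [] /= H1 H2; [exact: (notboth Hu H1 H2)|exact: (notboth Hu H2 H1)].
Qed.

Lemma sum_mem (c : seq (E * bool)) (P : pred (E * bool)) : uniq c ->
  \sum_(o | P o) ((o \in c)%:R : R) = \sum_(o <- c) ((P o)%:R : R).
Proof.
move=> Hu; rewrite big_uniq //= big_mkcond [RHS]big_mkcond /=.
by apply: eq_bigr => o _; case: (P o); case: (o \in c).
Qed.

Lemma path_heads a p z : path rel a (rcons p z) -> map oh (a :: p) = rcons (map ot p) (ot z).
Proof.
elim: p a => [|b p IH] a /=; first by rewrite andbT => /eqP ->.
by case/andP => /eqP Hab /IH /= ->; rewrite Hab.
Qed.

Lemma chi_flow c : is_circuit tl hd c -> is_flow tl hd (chi R c).
Proof.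
case=> Hn Hf Ht Hc v.
have Hu : uniq c := map_uniq Hf.
rewrite /is_flow.
under eq_bigr => o _ do rewrite chi_ochain //.
rewrite sumrB sum_mem //.
have E2 : \sum_(o | ot o == v) ((rev_o o \in c)%:R : R) = \sum_(o <- c) ((oh o == v)%:R).
  rewrite (reindex_inj (inv_inj (@rev_oK E))) /=.
  rewrite -(sum_mem (fun o => oh o == v) Hu).
  by apply: eq_big => o; [rewrite ot_rev | rewrite rev_oK].
rewrite E2; apply/eqP; rewrite subr_eq0; apply/eqP.
rewrite -(big_map ot predT (fun y => ((y == v)%:R : R))).
rewrite -(big_map oh predT (fun y => ((y == v)%:R : R))).
case: c Hn Hf Ht Hc Hu E2 => [|a p] // _ _ _ Hc _ _.
rewrite (path_heads Hc) -rot1_cons.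
by apply: perm_big; rewrite perm_sym perm_rot perm_refl.
Qed.

Lemma chi_int c : is_circuit tl hd c -> is_int_flow tl hd (chi R c).
Proof.
move=> Hc; split; first exact: chi_flow.
exists (fun e => if (e, true) \in c then (1 : int) else if (e, false) \in c then (-1 : int) else 0).
move=> e; rewrite /chi; case: ifP => _; [|case: ifP => _]; by [].
Qed.

End Chi.

Section Dots.
Variables (R : realFieldType) (V E : finType) (tl hd : E -> V).
Notation ot := (otail tl hd).
Notation oh := (Defs.ohead tl hd).

Lemma dot_chi (y : E -> R) (c : seq (E * bool)) : uniq (map fst c) ->
  dot y (chi R c) = \sum_(o <- c) ochain y o.
Proof.
move=> Hf; have Hu := map_uniq Hf.
rewrite big_uniq //= big_mkcond /=.
have -> : \sum_(p : E * bool) (if p \in c then ochain y p else 0) =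
          \sum_(e : E) \sum_(b : bool) (if (e, b) \in c then ochain y (e, b) else 0).
  by rewrite pair_big; apply: eq_bigr => -[e b] _.
rewrite /dot; apply: eq_bigr => e _; rewrite big_bool /= /chi /ochain /=.
have NB := notboth Hf (e:=e).
case H1: ((e, true) \in c); case H2: ((e, false) \in c) => /=.
- exfalso; exact: NB.
- by rewrite mulr1 addr0.
- by rewrite mulrN1 add0r.
- by rewrite mulr0 addr0.
Qed.

Lemma qf_chi (c : seq (E * bool)) : uniq (map fst c) ->
  qf (chi R c) = \sum_(o <- c) (1 : R).
Proof.
move=> Hf; rewrite /qf dot_chi // big_seq [RHS]big_seq; apply: eq_bigr => o Ho.
rewrite chi_ochain // Ho.
case Hr: (rev_o o \in c); last by rewrite subr0.
exfalso; case: o Ho Hr => e [] /= H1 H2; [exact: (notboth Hf H1 H2)|exact: (notboth Hf H2 H1)].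
Qed.

Lemma W_chi (x : E -> R) (c : seq (E * bool)) : uniq (map fst c) ->
  W x c = qf (chi R c) - 2 * dot x (chi R c).
Proof.
by move=> Hf; rewrite dot_chi // qf_chi // /W /wt sumrB mulr_sumr.
Qed.

Lemma qf_sub (x l : E -> R) : qf (fun e => x e - l e) = qf x - 2 * dot x l + qf l.
Proof.
rewrite /qf /dot mulr_sumr -sumrB -big_split /=; apply: eq_bigr => e _.
by rewrite -!expr2 sqrrB -mulr_natl mulrA !expr2.
Qed.

Lemma VO_circuit (x : E -> R) c : VO tl hd x -> is_circuit tl hd c -> 0 <= W x c.
Proof.
case=> Hfl Hmin Hc; have := Hmin _ (chi_int R Hc); rewrite qf_sub.
have [_ Hf _ _] := Hc; rewrite W_chi //.
by rewrite -addrA lerDl addrC.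
Qed.

Lemma VO_closed (x : E -> R) : VO tl hd x -> forall s u, walk tl hd u u s -> 0 <= W x s.
Proof.
move=> Hx; apply: closed_nonneg => c u Hn Hf Ht Hw.
by apply: VO_circuit => //; apply: (walk_circuit Hn Hf Ht Hw).
Qed.

End Dots.

Section Main.
Variables (R : realFieldType) (V E : finType) (tl hd : E -> V).
Notation ot := (otail tl hd).
Notation oh := (Defs.ohead tl hd).

Lemma face_VO (F : (E -> R) -> Prop) : is_face_VO tl hd F -> forall x, F x -> VO tl hd x.
Proof. by case=> a [b [_ H]] x /H []. Qed.

Lemma UF_tight (F : (E -> R) -> Prop) c x :
  in_UF tl hd F (chi R c) -> is_circuit tl hd c -> F x -> W x c = 0.
Proof.
case=> _ H [_ Hf _ _] Hx; have [_ Ht] := H x Hx.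
by rewrite W_chi // -Ht subrr.
Qed.

Lemma retpath (F : (E -> R) -> Prop) o : phi tl hd F o ->
  exists P, walk tl hd (oh o) (ot o) P /\ (forall o', o' \in P -> phi tl hd F o') /\
    (forall x, F x -> W x P = - wt x o).
Proof.
case=> lam [HU Hs]; have [[c [Hc Elam]] Hall] := HU; subst lam.
have [_ Hf _ _] := Hc; rewrite supp_chi // in Hs.
have [u Hw] := circuit_walk Hc.
case/splitPr: Hs Hw HU Hc Hf Hall => p1 p2 Hw HU Hc Hf Hall.
have [v [Hp1 /= /andP [/eqP Hov Hp2]]] := walk_catE Hw.
exists (p2 ++ p1); split; [|split].
- by apply: walk_cat Hp2 _; rewrite Hov.
- move=> o' Ho'; exists (chi R (p1 ++ o :: p2)); split => //.
  rewrite supp_chi // mem_cat in_cons; move: Ho'; rewrite mem_cat.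
  by case/orP=> ->; rewrite ?orbT.
- move=> x Hx; have H0 := UF_tight HU Hc Hx.
  move: H0; rewrite !W_cat W_cons => H0.
  apply: (addrI (wt x o)); rewrite subrr -H0.
  by rewrite [RHS]addrCA (addrC (W x p1)).
Qed.

Lemma walk_crt (S : E * bool -> Prop) u v P : walk tl hd u v P -> (forall o, o \in P -> S o) ->
  clos_refl_trans V (fun a b => exists o, S o /\ ot o = a /\ oh o = b) u v.
Proof.
elim: P u => [|o P IH] u /=; first by move/eqP->; constructor 2.
case/andP=> /eqP Hou Hw HS; apply: (rt_trans _ _ _ (oh o)).
  by apply: rt_step; exists o; split => //; apply: HS; rewrite mem_head.
by apply: IH => // o' Ho'; apply: HS; rewrite in_cons Ho' orbT.
Qed.

Lemma rev_build (x : E -> R) u v s : walk tl hd u v s ->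
  (forall o, o \in s -> exists P, walk tl hd (oh o) (ot o) P /\ W x P = - wt x o) ->
  exists Q, walk tl hd v u Q /\ W x Q = - W x s.
Proof.
elim: s u => [|o s IH] u /=.
  by move/eqP=> -> _; exists [::]; rewrite /= eqxx W_nil oppr0.
case/andP=> /eqP Hou Hw H.
have [Q [HQ WQ]] := IH _ Hw (fun o' Ho' => H o' ltac:(by rewrite in_cons Ho' orbT)).
have [P [HP WP]] := H o (mem_head _ _).
exists (Q ++ P); split; first by apply: walk_cat HQ _; rewrite -Hou.
by rewrite W_cat W_cons WQ WP [RHS]opprD addrC.
Qed.

End Main.

Theorem mainTheorem6 (R : realFieldType) (V E : finType) (tl hd : E -> V)
  (F : (E -> R) -> Prop) :
  connected_graph tl hd ->
  is_face_VO tl hd F ->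
  (exists x, F x) ->
  strongly_connected_orientation tl hd (phi tl hd F) /\
  (forall lam : E -> R, in_Xi1 tl hd lam ->
     (in_UF tl hd F lam <-> (forall o, supp lam o -> phi tl hd F o))).
Proof.
move=> _ Hface [x0 Hx0]; have HF := face_VO Hface.
split; first split.
- move=> e [H1 H2].
  have [P1 [W1p [_ W1]]] := retpath H1.
  have [P2 [W2p [_ W2]]] := retpath H2.
  have Hw := walk_cat W1p W2p.
  have := VO_closed (HF _ Hx0) Hw.
  rewrite W_cat W1 // W2 // -opprD (wt_rev x0 (e, true)) oppr_ge0 => H.
  have : (0 : R) < 2 by rewrite ltr0n.
  by rewrite ltNge H.
- move=> u v H; induction H as [a b [o [Ho [[<- <-] | [<- <-]]]] | | ].
  + by apply: rt_step; exists o.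
  + have [P [HP [HS _]]] := retpath Ho.
    exact: (walk_crt HP HS).
  + exact: rt_refl.
  + exact: rt_trans IHclos_refl_trans1 IHclos_refl_trans2.
- move=> lam Hlam; split; first by move=> HU o Ho; exists lam.
  move=> Hsub; case: Hlam => c [Hc Elam]; split; first by exists c.
  move=> x Hx; split; first by case: (HF _ Hx).
  subst lam; have [_ Hf _ _] := Hc.
  have HW : W x c = 0.
    apply/eqP; rewrite eq_le (VO_circuit (HF _ Hx) Hc) andbT.
    have [u Hw] := circuit_walk Hc.
    have [Q [HQ WQ]] := rev_build (x := x) Hw (fun o Ho =>
      let: ex_intro P (conj HP (conj _ HWP)) := retpath (Hsub o ltac:(by rewrite supp_chi)) in
      ex_intro _ P (conj HP (HWP x Hx))).
    by rewrite -oppr_ge0 -WQ (VO_closed (HF _ Hx) HQ).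
  by apply/eqP; rewrite eq_sym -subr_eq0 -W_chi // HW.
Qed.
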